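(* Let $S=(n,\phi,F)$ be a semicoherent system whose component lifetimes $X_1,\ldots,X_n$ are exchangeable and have no ties. Then for every $j\in[n]$, $$I_{\mathrm{BP}}^{(j)}=b_j:=\sum_{A\subseteq[n]\setminus\{j\}}\frac{1}{n\binom{n-1}{|A|}}\big(\phi(A\cup\{j\})-\phi(A)\big).$$
   Context: Semicoherent system: $\phi:2^{[n]}\to\{0,1\}$ nondecreasing (subsets identified with Boolean vectors), $\phi(\varnothing)=0$, $\phi([n])=1$; $F$ is the joint c.d.f. of nonnegative lifetimes; no ties means $\Pr(X_i=X_k)=0$ for $i\neq k$. System lifetime $T=\inf\{t\geq0:\phi(\{i:X_i>t\})=0\}$; $I_{\mathrm{BP}}^{(j)}=\Pr(T=X_j)$. *)

(* Defs.v *)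
From mathcomp Require Import all_boot all_fingroup.
From Stdlib Require Import Reals.

Set Implicit Arguments.
Unset Strict Implicit.
Unset Printing Implicit Defensive.

Local Open Scope R_scope.

(* P is total on all predicates but only meaningful on events. *)
Record probability_space := {
  ps_carrier :> Type;
  ps_meas : (ps_carrier -> Prop) -> Prop;
  ps_P : (ps_carrier -> Prop) -> R;
  meas_full : ps_meas (fun _ => True);
  meas_compl : forall A, ps_meas A -> ps_meas (fun w => ~ A w);
  meas_union : forall A : nat -> ps_carrier -> Prop,
      (forall k, ps_meas (A k)) -> ps_meas (fun w => exists k, A k w);
  P_nonneg : forall A, ps_meas A -> 0 <= ps_P A;
  P_full : ps_P (fun _ => True) = 1;
  P_sigma_additive : forall A : nat -> ps_carrier -> Prop,
      (forall k, ps_meas (A k)) ->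
      (forall k l, k <> l -> forall w, A k w -> A l w -> False) ->
      infinite_sum (fun k => ps_P (A k)) (ps_P (fun w => exists k, A k w))
}.

Inductive borel_Rn (n : nat) : (('I_n -> R) -> Prop) -> Prop :=
  | borel_gen (i : 'I_n) (t : R) : borel_Rn (fun x => x i <= t)
  | borel_compl (B : ('I_n -> R) -> Prop) :
      borel_Rn B -> borel_Rn (fun x => ~ B x)
  | borel_union (B : nat -> ('I_n -> R) -> Prop) :
      (forall k, borel_Rn (B k)) -> borel_Rn (fun x => exists k, B k x).

Definition random_variable (Om : probability_space) (Y : Om -> R) : Prop :=
  forall t, @ps_meas Om (fun w => Y w <= t).

Definition semicoherent (n : nat) (phi : {set 'I_n} -> bool) : Prop :=
  (forall A B : {set 'I_n}, A \subset B -> leq (phi A) (phi B)) /\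
  phi set0 = false /\ phi setT = true.

Definition exchangeable (n : nat) (Om : probability_space)
    (X : 'I_n -> Om -> R) : Prop :=
  forall (s : {perm 'I_n}) (B : ('I_n -> R) -> Prop), borel_Rn B ->
    @ps_P Om (fun w => B (fun i => X (s i) w)) =
    @ps_P Om (fun w => B (fun i => X i w)).

Definition no_ties (n : nat) (Om : probability_space)
    (X : 'I_n -> Om -> R) : Prop :=
  forall i k : 'I_n, i <> k -> @ps_P Om (fun w => X i w = X k w) = 0.

Definition Rltb (x y : R) : bool := if Rlt_dec x y then true else false.

Definition is_inf (S : R -> Prop) (m : R) : Prop :=
  (forall s, S s -> m <= s) /\
  (forall m', (forall s, S s -> m' <= s) -> m' <= m).

(* {t >= 0 : phi({i : X_i > t}) = 0}; the system lifetime T(w) is its inf. *)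
Definition failed_times (n : nat) (phi : {set 'I_n} -> bool)
    (Om : probability_space) (X : 'I_n -> Om -> R) (w : Om) : R -> Prop :=
  fun t => 0 <= t /\ phi [set i | Rltb t (X i w)] = false.

Definition I_BP (n : nat) (phi : {set 'I_n} -> bool)
    (Om : probability_space) (X : 'I_n -> Om -> R) (j : 'I_n) : R :=
  @ps_P Om (fun w => is_inf (failed_times phi X w) (X j w)).

Definition bcoef (n : nat) (phi : {set 'I_n} -> bool) (j : 'I_n) : R :=
  \big[Rplus/0]_(A : {set 'I_n} | j \notin A)
     (/ (INR n * INR 'C(n.-1, #|A|)) * (INR (phi (j |: A)) - INR (phi A))).

(* Main.v *)
Require Import Defs.
From HB Require Import structures.
From mathcomp Require Import all_boot all_fingroup.
From Stdlib Require Import Reals ZArith Lra Lia Classical FunctionalExtensionality PropExtensionality.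
Set Implicit Arguments.
Unset Strict Implicit.
Local Open Scope R_scope.

HB.instance Definition _ := Monoid.isComLaw.Build R 0 Rplus (fun a b c => esym (Rplus_assoc a b c)) Rplus_comm Rplus_0_l.

Lemma P_ext (Om : probability_space) (A B : Om -> Prop) :
  (forall w, A w <-> B w) -> ps_P A = ps_P B.
Proof. move=> H; f_equal; apply: functional_extensionality => w; exact: propositional_extensionality. Qed.

Lemma meas_ext (Om : probability_space) (A B : Om -> Prop) :
  (forall w, A w <-> B w) -> ps_meas A -> ps_meas B.
Proof. move=> H; have -> : B = A; last by [].
apply: functional_extensionality => w; apply: propositional_extensionality; by split; move/H. Qed.

Lemma meas_empty (Om : probability_space) : @ps_meas Om (fun _ => False).
Proof. apply: meas_ext (meas_compl (meas_full Om)); by move=> w; split. Qed.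

Lemma meas_or (Om : probability_space) (A B : Om -> Prop) :
  ps_meas A -> ps_meas B -> ps_meas (fun w => A w \/ B w).
Proof. move=> hA hB.
apply: (meas_ext _ (meas_union (A := fun k => if k is 0%nat then A else B) _)).
  move=> w; split; [by case=> [[|k]] H; [left|right] | case=> H; [by exists 0%nat| by exists 1%nat]].
by case.
Qed.

Lemma meas_and (Om : probability_space) (A B : Om -> Prop) :
  ps_meas A -> ps_meas B -> ps_meas (fun w => A w /\ B w).
Proof. move=> hA hB.
apply: (meas_ext _ (meas_compl (meas_or (meas_compl hA) (meas_compl hB)))).
move=> w; split; last by case=> ? ? [].
move=> H; split; apply: NNPP => ?; apply: H; tauto.
Qed.

Lemma meas_not (Om : probability_space) (A : Om -> Prop) : ps_meas A -> ps_meas (fun w => ~ A w).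
Proof. exact: meas_compl. Qed.

Lemma sum_eventually (f : nat -> R) (l : R) :
  (forall N, (1 <= N)%nat -> sum_f_R0 f N = l) -> infinite_sum f l.
Proof. move=> H eps he; exists 1%nat => m hm; rewrite H; last by apply/leP.
rewrite /R_dist Rminus_diag Rabs_R0; lra. Qed.

Lemma P_empty (Om : probability_space) : @ps_P Om (fun _ => False) = 0.
Proof.
have := P_sigma_additive (A := fun _ : nat => fun _ : Om => False) (fun _ => meas_empty Om) (fun k l _ w f _ => f).
have -> : ps_P (fun w : Om => exists _ : nat, False) = ps_P (fun _ : Om => False).
  by apply: P_ext => w; split => // -[].
have c0 : 0 <= ps_P (fun _ : Om => False) by apply: P_nonneg; apply: meas_empty.
move: c0; set c := ps_P _ => c0 H; clearbody c.
have hs : forall N, sum_f_R0 (fun _ => c) N = INR N.+1 * c.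
  elim=> [|N IH]; first by rewrite /= Rmult_1_l.
  change (sum_f_R0 (fun _ => c) N + c = INR N.+2 * c); rewrite IH (S_INR N.+1); lra.
case: (Rle_lt_or_eq_dec _ _ c0) => // cpos; exfalso.
have c2 : 0 < c/2 by lra.
have [N HN] := H (c/2) c2.
have := HN (S N) ltac:(lia). rewrite hs /R_dist S_INR S_INR.
have := pos_INR N => hN.
rewrite Rabs_right; nra.
Qed.

Lemma P_add (Om : probability_space) (A B : Om -> Prop) :
  ps_meas A -> ps_meas B -> (forall w, A w -> B w -> False) ->
  ps_P (fun w => A w \/ B w) = ps_P A + ps_P B.
Proof. move=> hA hB hd.
pose S := fun k : nat => match k with 0%nat => A | 1%nat => B | _ => fun _ : Om => False end.
have mS : forall k, ps_meas (S k) by case=> [|[|k]] //=; apply: meas_empty.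
have dS : forall k l, k <> l -> forall w, S k w -> S l w -> False.
  move=> [|[|k]] [|[|l]] //= _ w; by [move=> a b; exact: hd a b | move=> b a; exact: hd a b | move=> _ [] | move=> []].
have H := P_sigma_additive mS dS.
have -> : ps_P (fun w => A w \/ B w) = ps_P (fun w => exists k, S k w).
  apply: P_ext => w; split; first by case=> ?; [exists 0%nat|exists 1%nat].
  by case=> -[|[|k]] //= ?; [left|right].
apply: (uniqueness_sum _ _ _ H); apply: sum_eventually.
case=> [|N] // _; elim: N => [|N IH]; first by [].
change (sum_f_R0 (fun k : nat => ps_P (S k)) N.+1 + ps_P (S N.+2) = ps_P A + ps_P B).
rewrite IH /= P_empty; lra.
Qed.

Lemma P_mono (Om : probability_space) (A B : Om -> Prop) :
  ps_meas A -> ps_meas B -> (forall w, A w -> B w) -> ps_P A <= ps_P B.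
Proof. move=> hA hB hAB.
have -> : ps_P B = ps_P (fun w => A w \/ (B w /\ ~ A w)).
  apply: P_ext => w; split; [move=> ?; tauto| case; [exact: hAB|tauto]].
rewrite P_add //; [|by apply: meas_and => //; apply: meas_compl|tauto].
have : 0 <= ps_P (fun w => B w /\ ~ A w) by apply: P_nonneg; apply: meas_and => //; apply: meas_compl.
lra.
Qed.

Lemma P_le1 (Om : probability_space) (A : Om -> Prop) : ps_meas A -> ps_P A <= 1.
Proof. move=> hA; rewrite -(P_full Om); apply: P_mono => //; exact: meas_full. Qed.

Lemma P_compl (Om : probability_space) (A : Om -> Prop) : ps_meas A -> ps_P (fun w => ~ A w) = 1 - ps_P A.
Proof. move=> hA. rewrite -(P_full Om).
rewrite [X in _ = X - _](P_ext (B := fun w => A w \/ ~ A w)); last by move=> w; split => _; [exact: classic | exact: I].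
rewrite P_add //; first lra; by [exact: meas_compl | move=> w ? []]. Qed.

Lemma P_sub (Om : probability_space) (A B : Om -> Prop) :
  ps_meas A -> ps_meas B -> ps_P (fun w => A w \/ B w) <= ps_P A + ps_P B.
Proof. move=> hA hB.
rewrite (P_ext (B := fun w => A w \/ (B w /\ ~ A w))); last by move=> w; split; [move=>?; tauto|case; tauto].
rewrite P_add //; [|by apply: meas_and => //; apply: meas_compl|tauto].
suff : ps_P (fun w => B w /\ ~ A w) <= ps_P B by lra.
apply: P_mono => //; [by apply: meas_and => //; apply: meas_compl| tauto].
Qed.

Lemma P_seq_union (Om : probability_space) (I : eqType) (r : seq I) (E : I -> Om -> Prop) :
  uniq r -> (forall k, ps_meas (E k)) ->
  (forall k l, k \in r -> l \in r -> k <> l -> forall w, E k w -> E l w -> False) ->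
  ps_meas (fun w => exists k, k \in r /\ E k w) /\
  ps_P (fun w => exists k, k \in r /\ E k w) = \big[Rplus/0]_(k <- r) ps_P (E k).
Proof.
elim: r => [|a r IH] /= Hu hm hd.
  rewrite big_nil; split.
    by apply: (meas_ext _ (meas_empty Om)) => w; split => // -[k []].
  by rewrite -(P_empty Om); apply: P_ext => w; split => // -[k []].
case/andP: Hu => anr ur.
have sub : forall k, k \in r -> k \in a :: r by move=> k kr; rewrite in_cons kr orbT.
have [m1 e1] := IH ur hm (fun k l hk hl => hd k l (sub k hk) (sub l hl)).
have eqv : forall w, (exists k, k \in a :: r /\ E k w) <-> (E a w \/ exists k, k \in r /\ E k w).
  move=> w; split.
    case=> k []; rewrite in_cons; case/orP => [/eqP->|kr] h; [by left| by right; exists k].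
  case=> [h|[k [kr h]]]; [exists a; by rewrite mem_head | exists k; by rewrite in_cons kr orbT].
split; first by apply: (meas_ext (fun w => iff_sym (eqv w))); apply: meas_or.
rewrite (P_ext eqv) big_cons P_add // -?e1 //.
move=> w ha [k [kr hk]]; apply: (hd a k (mem_head _ _) (sub k kr)) ha hk.
by move=> ak; move: anr; rewrite ak kr.
Qed.

Lemma P_fin_union (Om : probability_space) (I : finType) (Q : pred I) (E : I -> Om -> Prop) :
  (forall k, ps_meas (E k)) ->
  (forall k l, Q k -> Q l -> k <> l -> forall w, E k w -> E l w -> False) ->
  ps_meas (fun w => exists k, Q k /\ E k w) /\
  ps_P (fun w => exists k, Q k /\ E k w) = \big[Rplus/0]_(k | Q k) ps_P (E k).
Proof. move=> hm hd.
have [m e] := P_seq_union (r := enum Q) (enum_uniq Q) hm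
  (fun k l hk hl => hd k l ltac:(by rewrite mem_enum in hk) ltac:(by rewrite mem_enum in hl)).
have eqv : forall w, (exists k, k \in enum Q /\ E k w) <-> (exists k, Q k /\ E k w).
  move=> w; split; case=> k [h1 h2]; exists k; split => //; [by rewrite mem_enum in h1 | by rewrite mem_enum].
split; first exact: meas_ext eqv m.
rewrite -(P_ext eqv) e big_enum_cond; apply: eq_bigl => k; by rewrite andbT.
Qed.

Lemma P_null_seq (Om : probability_space) (I : eqType) (r : seq I) (E : I -> Om -> Prop) :
  (forall k, ps_meas (E k)) -> (forall k, ps_P (E k) = 0) ->
  ps_meas (fun w => exists k, k \in r /\ E k w) /\ ps_P (fun w => exists k, k \in r /\ E k w) = 0.
Proof. move=> hm h0; elim: r => [|a r [IHm IHe]].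
  split; first by apply: (meas_ext _ (meas_empty Om)) => w; split => // -[k []].
  by rewrite -(P_empty Om); apply: P_ext => w; split => // -[k []].
have eqv : forall w, (exists k, k \in a :: r /\ E k w) <-> (E a w \/ exists k, k \in r /\ E k w).
  move=> w; split.
    case=> k []; rewrite in_cons; case/orP => [/eqP->|kr] h; [by left| by right; exists k].
  case=> [h|[k [kr h]]]; [exists a; by rewrite mem_head | exists k; by rewrite in_cons kr orbT].
have mU : ps_meas (fun w => E a w \/ exists k, k \in r /\ E k w) by apply: meas_or.
split; first exact: meas_ext (fun w => iff_sym (eqv w)) mU.
rewrite (P_ext eqv).
have := P_sub (hm a) IHm. have := P_nonneg mU. rewrite h0 IHe. lra.
Qed.

Lemma P_null_fin (Om : probability_space) (I : finType) (E : I -> Om -> Prop) :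
  (forall k, ps_meas (E k)) -> (forall k, ps_P (E k) = 0) ->
  ps_meas (fun w => exists k, E k w) /\ ps_P (fun w => exists k, E k w) = 0.
Proof. move=> hm h0; have [m e] := P_null_seq (enum I) hm h0.
have eqv : forall w, (exists k, k \in enum I /\ E k w) <-> (exists k, E k w).
  by move=> w; split; [case=> k [_ h]; exists k | case=> k h; exists k; rewrite mem_enum].
split; first exact: meas_ext eqv m. by rewrite -(P_ext eqv). Qed.

Lemma borel_ext n (B C : ('I_n -> R) -> Prop) : (forall x, B x <-> C x) -> borel_Rn B -> borel_Rn C.
Proof. move=> H; have -> : C = B; last by [].
apply: functional_extensionality => w; apply: propositional_extensionality; by split; move/H. Qed.

Lemma borel_not n (B : ('I_n -> R) -> Prop) : borel_Rn B -> borel_Rn (fun x => ~ B x).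
Proof. exact: borel_compl. Qed.

Lemma borel_or n (A B : ('I_n -> R) -> Prop) : borel_Rn A -> borel_Rn B -> borel_Rn (fun x => A x \/ B x).
Proof. move=> hA hB.
apply: (borel_ext _ (borel_union (B := fun k => if k is 0%nat then A else B) _)).
  move=> w; split; [by case=> [[|k]] H; [left|right] | case=> H; [by exists 0%nat| by exists 1%nat]].
by case.
Qed.

Lemma borel_and n (A B : ('I_n -> R) -> Prop) : borel_Rn A -> borel_Rn B -> borel_Rn (fun x => A x /\ B x).
Proof. move=> hA hB.
apply: (borel_ext _ (borel_compl (borel_or (borel_compl hA) (borel_compl hB)))).
move=> w; split; last by case=> ? ? [].
move=> H; split; apply: NNPP => ?; apply: H; tauto.
Qed.

Lemma borel_imp n (A B : ('I_n -> R) -> Prop) : borel_Rn A -> borel_Rn B -> borel_Rn (fun x => A x -> B x).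
Proof. move=> hA hB; apply: (borel_ext _ (borel_or (borel_compl hA) hB)).
move=> x; split; first by case=> [h1 h2|h]; [exact: False_ind (h1 h2)| ].
move=> h; case: (classic (A x)) => ha; [right; exact: h|by left]. Qed.

Lemma borel_False n (i0 : 'I_n) : @borel_Rn n (fun _ => False).
Proof. apply: (borel_ext _ (borel_and (borel_gen i0 0) (borel_compl (borel_gen i0 0)))).
by move=> x; split => // -[]. Qed.

Lemma borel_True n (i0 : 'I_n) : @borel_Rn n (fun _ => True).
Proof. apply: (borel_ext _ (borel_compl (borel_False i0))). by move=> x; split => [_|_ []]. Qed.

Lemma borel_const n (i0 : 'I_n) (P : Prop) : @borel_Rn n (fun _ => P).
Proof. case: (classic P) => h.
  by apply: (borel_ext _ (borel_True i0)) => x; split.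
by apply: (borel_ext _ (borel_False i0)) => x; split. Qed.

Lemma borel_forall_seq n (i0 : 'I_n) (I : eqType) (r : seq I) (C : I -> ('I_n -> R) -> Prop) :
  (forall k, borel_Rn (C k)) -> borel_Rn (fun x => forall k, k \in r -> C k x).
Proof. move=> hC; elim: r => [|a r IH].
  by apply: (borel_ext _ (borel_True i0)) => x; split.
apply: (borel_ext _ (borel_and (hC a) IH)) => x; split.
  case=> h1 h2 k; rewrite in_cons; case/orP => [/eqP->|]; [by []| exact: h2].
move=> h; split; [apply: h; exact: mem_head | move=> k kr; apply: h; by rewrite in_cons kr orbT].
Qed.

Lemma borel_forall_fin n (i0 : 'I_n) (I : finType) (C : I -> ('I_n -> R) -> Prop) :
  (forall k, borel_Rn (C k)) -> borel_Rn (fun x => forall k, C k x).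
Proof. move=> hC; apply: (borel_ext _ (borel_forall_seq i0 (enum I) hC)) => x; split.
  move=> h k; apply: h; by rewrite mem_enum.
by move=> h k _. Qed.

Lemma borel_exists_fin n (i0 : 'I_n) (I : finType) (C : I -> ('I_n -> R) -> Prop) :
  (forall k, borel_Rn (C k)) -> borel_Rn (fun x => exists k, C k x).
Proof. move=> hC; apply: (borel_ext _ (borel_compl (borel_forall_fin i0 (fun k => borel_compl (hC k))))).
move=> x; split; last by case=> k h H; exact: H k h.
move=> h; apply: NNPP => h'; apply: h => k hk; apply: h'; by exists k. Qed.

Lemma IZR_nat (z : Z) : exists a b : nat, IZR z = INR a - INR b.
Proof. case: z => [|p|p].
- by exists 0%nat, 0%nat; rewrite /=; lra.
- exists (Pos.to_nat p), 0%nat; rewrite INR_IZR_INZ positive_nat_Z /=; lra.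
- exists 0%nat, (Pos.to_nat p); rewrite IZR_NEG (INR_IZR_INZ (Pos.to_nat p)) positive_nat_Z /=; lra.
Qed.

Lemma dense_nat (u v : R) : u < v -> exists a b c : nat,
  u < (INR a - INR b) / INR (S c) < v.
Proof. move=> uv.
have [N [HN N0]] := archimed_cor1 (v - u) ltac:(lra).
have Npos : 0 < INR N by apply: lt_0_INR.
have [h1 h2] := archimed (u * INR N).
have [a [b eab]] := IZR_nat (up (u * INR N)).
exists a, b, (N.-1).
have -> : S N.-1 = N by lia.
rewrite -eab; split.
  apply: (Rmult_lt_reg_r (INR N)) => //. rewrite /Rdiv Rmult_assoc Rinv_l; lra.
apply: (Rmult_lt_reg_r (INR N)) => //. rewrite /Rdiv Rmult_assoc Rinv_l; last lra.
have : / INR N * INR N = 1 by rewrite Rinv_l; lra.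
have : INR N * (v - u) > 1.
  have := Rmult_lt_compat_l (INR N) _ _ Npos HN. rewrite Rinv_r; lra.
nra.
Qed.

Lemma borel_lt n (i k : 'I_n) : borel_Rn (fun x => x i < x k).
Proof.
pose t (a b c : nat) := (INR a - INR b) / INR (S c).
apply: (borel_ext (B := fun x => exists a b c, x i <= t a b c /\ ~ x k <= t a b c)).
  move=> x; split.
    case=> a [b [c [h1 h2]]]; lra.
  move=> h; have [a [b [c [h1 h2]]]] := dense_nat h; exists a, b, c; rewrite /t; lra.
apply: borel_union => a; apply: borel_union => b; apply: borel_union => c.
apply: borel_and; [exact: borel_gen| apply: borel_compl; exact: borel_gen].
Qed.

Lemma borel_le n (i k : 'I_n) : borel_Rn (fun x => x i <= x k).
Proof. apply: (borel_ext _ (borel_compl (borel_lt k i))) => x; split => h; lra. Qed.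

Lemma borel_eq n (i k : 'I_n) : borel_Rn (fun x => x i = x k).
Proof. apply: (borel_ext _ (borel_and (borel_le i k) (borel_le k i))) => x; split => h; lra. Qed.

Lemma borel_meas n (Om : probability_space) (X : 'I_n -> Om -> R) (B : ('I_n -> R) -> Prop) :
  (forall i, random_variable (X i)) -> borel_Rn B -> ps_meas (fun w => B (fun i => X i w)).
Proof. move=> hX; elim=> [i t|C _ IH|C _ IH].
- exact: hX.
- exact: meas_compl.
- exact: meas_union.
Qed.

Lemma RltbP a b : Rltb a b = true <-> a < b.
Proof. rewrite /Rltb; case: Rlt_dec => h; split => //; by move=> /h. Qed.

Lemma RltbF a b : Rltb a b = false <-> ~ a < b.
Proof. rewrite /Rltb; case: Rlt_dec => h; split => //. Qed.

Lemma sep_dist n (x : 'I_n -> R) (c : R) :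
  exists d, 0 < d /\ forall i, x i <> c -> d <= Rabs (x i - c).
Proof.
suff H : forall r : seq 'I_n, exists d, 0 < d /\ forall i, i \in r -> x i <> c -> d <= Rabs (x i - c).
  have [d [d0 hd]] := H (enum 'I_n); exists d; split => // i; apply: hd; by rewrite mem_enum.
elim=> [|a r [d [d0 hd]]]; first by exists 1; split => //; lra.
case: (Req_dec (x a) c) => ha.
  exists d; split => // i; rewrite in_cons; case/orP => [/eqP->|]; [by []| exact: hd].
have ha' : 0 < Rabs (x a - c) by apply: Rabs_pos_lt; lra.
exists (Rmin d (Rabs (x a - c))); split; first by apply: Rmin_pos.
move=> i; rewrite in_cons; case/orP => [/eqP->|ir] hi; first exact: Rmin_r.
apply: Rle_trans (Rmin_l _ _) (hd i ir hi).
Qed.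

Lemma mono_true n (phi : {set 'I_n} -> bool) (A B : {set 'I_n}) :
  semicoherent phi -> A \subset B -> phi A = true -> phi B = true.
Proof. case=> hm _ hAB hA; have := hm _ _ hAB; rewrite hA; by case: (phi B). Qed.

Lemma mono_false n (phi : {set 'I_n} -> bool) (A B : {set 'I_n}) :
  semicoherent phi -> A \subset B -> phi B = false -> phi A = false.
Proof. move=> hs hAB hB; case hA: (phi A) => //; by rewrite (mono_true hs hAB hA) in hB. Qed.

Lemma char_inf n (phi : {set 'I_n} -> bool) (x : 'I_n -> R) (j : 'I_n) :
  semicoherent phi -> (forall i, 0 <= x i) ->
  is_inf (fun t => 0 <= t /\ phi [set i | Rltb t (x i)] = false) (x j) <->
  (phi [set i | Rltb (x j) (x i)] = false /\ phi [set i | ~~ Rltb (x i) (x j)] = true).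
Proof.
move=> hs x0; split.
- case=> lb glb.
  have [d [d0 hd]] := sep_dist x (x j).
  split.
    case hU: (phi _) => //; exfalso.
    have : x j + d <= x j; last lra.
    apply: glb => s [s0 hs'].
    have := lb s (conj s0 hs') => hjs.
    apply: Rnot_lt_le => hsd.
    have sub : [set i | Rltb (x j) (x i)] \subset [set i | Rltb s (x i)].
      apply/subsetP => i; rewrite !inE => /RltbP hi; apply/RltbP.
      have := hd i ltac:(lra); rewrite Rabs_right; lra.
    by rewrite (mono_true hs sub hU) in hs'.
  case hV: (phi _) => //; exfalso.
  case: (Rle_lt_dec (x j) 0) => hj.
    have : [set i | ~~ Rltb (x i) (x j)] = setT.
      apply/setP => i; rewrite !inE; apply/negP => /RltbP; have := x0 i; lra.
    by move=> e; rewrite e in hV; case: hs => _ [_ hT]; rewrite hT in hV.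
  pose t := Rmax (x j - d) (x j / 2).
  have t0 : 0 <= t by apply: Rle_trans (Rmax_r _ _); lra.
  have tj : t < x j by apply: Rmax_lub_lt; lra.
  have sub : [set i | Rltb t (x i)] \subset [set i | ~~ Rltb (x i) (x j)].
    apply/subsetP => i; rewrite !inE => /RltbP hi; apply/negP => /RltbP hij.
    have := hd i ltac:(lra); rewrite Rabs_left; last lra.
    have := Rmax_l (x j - d) (x j / 2); rewrite -/t; lra.
  have := lb t (conj t0 (mono_false hs sub hV)); lra.
- case=> hU hV; split.
    move=> s [s0 hs']; apply: Rnot_lt_le => sj.
    have sub : [set i | ~~ Rltb (x i) (x j)] \subset [set i | Rltb s (x i)].
      apply/subsetP => i; rewrite !inE => /negP hi; apply/RltbP.
      case: (Rlt_le_dec s (x i)) => // h; exfalso; apply: hi; apply/RltbP; lra.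
    by rewrite (mono_true hs sub hV) in hs'.
  move=> m' hm'; apply: hm'; split => //.
Qed.

Definition LL n (k : 'I_n) (B : {set 'I_n}) : seq 'I_n := k :: enum B ++ enum (~: (k |: B)).

Lemma LL_props n (k : 'I_n) (B : {set 'I_n}) : k \notin B ->
  [/\ uniq (LL k B), forall l, l \in LL k B & size (LL k B) = n].
Proof. move=> kB.
have u : uniq (LL k B).
  rewrite /LL cons_uniq mem_cat !mem_enum !inE eqxx /= (negbTE kB) /=.
  rewrite cat_uniq !enum_uniq /= andbT; apply/hasPn => l; rewrite !mem_enum !inE negb_or.
  by case/andP.
have m : forall l, l \in LL k B.
  move=> l; rewrite /LL in_cons mem_cat !mem_enum !inE; by case: (l == k); case: (l \in B).
split => //.
have := perm_size (uniq_perm u (enum_uniq 'I_n) (fun l => ltac:(by rewrite m mem_enum))).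
by rewrite size_enum_ord.
Qed.

Lemma exists_perm n (A B : {set 'I_n}) (i k : 'I_n) :
  i \notin A -> k \notin B -> #|A| = #|B| ->
  exists s : {perm 'I_n}, s k = i /\ forall l, (s l \in A) = (l \in B).
Proof.
move=> iA kB cAB.
have [uA mA sA] := LL_props iA.
have [uB mB sB] := LL_props kB.
have eS : size (LL i A) = size (LL k B) by rewrite sA sB.
pose f l := nth i (LL i A) (index l (LL k B)).
have finj : injective f.
  move=> l1 l2; rewrite /f => /eqP; rewrite nth_uniq //; last 2 first.
  - by rewrite eS index_mem.
  - by rewrite eS index_mem.
  move=> /eqP e; rewrite -(nth_index k (mB l1)) -(nth_index k (mB l2)) e //.
exists (perm finj); split.
  by rewrite permE /f /LL /= eqxx.
move=> l; rewrite permE /f /LL /=.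
have eAB : size (enum A) = size (enum B) by rewrite -!cardE.
have eC : size (enum (~: (i |: A))) = size (enum (~: (k |: B))).
  move: eS; rewrite /LL /= !size_cat eAB => -[] /eqP; rewrite eqn_add2l; by move/eqP.

case: (eqVneq k l) => [<-|kl]; first by rewrite /= (negbTE kB) (negbTE iA).
rewrite /= index_cat nth_cat mem_enum.
case lB: (l \in B).
  have lt : (index l (enum B) < size (enum B))%nat by rewrite index_mem mem_enum.
  rewrite eAB lt.
  by rewrite -mem_enum mem_nth // eAB.
have lC : l \in enum (~: (k |: B)).
  by rewrite mem_enum !inE lB orbF eq_sym.
rewrite eAB ltnNge leq_addr /= addKn.
have : nth i (enum (~: (i |: A))) (index l (enum (~: (k |: B)))) \in enum (~: (i |: A)).
  by apply: mem_nth; rewrite eC index_mem.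
rewrite mem_enum !inE negb_or => /andP [_ /negbTE ->] //.
Qed.

Definition Fev n (A : {set 'I_n}) (i : 'I_n) (x : 'I_n -> R) : Prop :=
  forall k, k <> i -> (k \in A -> x i < x k) /\ (k \notin A -> x k < x i).

Lemma borel_Fev n (A : {set 'I_n}) i : borel_Rn (Fev A i).
Proof.
apply: (borel_forall_fin i) => k.
apply: borel_imp; first exact: borel_const.
apply: borel_and; apply: borel_imp; try exact: borel_const; exact: borel_lt.
Qed.

Lemma Fev_perm n (A B : {set 'I_n}) i k (s : {perm 'I_n}) (x : 'I_n -> R) :
  s k = i -> (forall l, (s l \in A) = (l \in B)) ->
  (Fev B k (fun l => x (s l)) <-> Fev A i x).
Proof. move=> ski hs; split.
  move=> H l' l'i; pose l := (s^-1)%g l'.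
  have sl : s l = l' by rewrite /l permKV.
  have lk : l <> k by move=> e; apply: l'i; rewrite -sl e.
  have [h1 h2] := H l lk; rewrite ski -(hs l) sl in h1 h2.
  by split.
move=> H l lk.
have sli : s l <> i by move=> e; apply: lk; apply: (@perm_inj _ s); rewrite e ski.
have [h1 h2] := H (s l) sli; rewrite ski -(hs l); by split.
Qed.

Lemma Fev_same n (A B : {set 'I_n}) i x :
  i \notin A -> i \notin B -> Fev A i x -> Fev B i x -> A = B.
Proof. move=> iA iB hA hB; apply/setP => k.
case: (eqVneq k i) => [->|ki]; first by rewrite (negbTE iA) (negbTE iB).
have ki' : k <> i by apply/eqP.
have [a1 a2] := hA k ki'; have [b1 b2] := hB k ki'.
case kA: (k \in A); case kB: (k \in B) => //.
- have := a1 kA; have := b2 (negbT kB); lra.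
- have := b1 kB; have := a2 (negbT kA); lra.
Qed.

Lemma Fev_card n (A B : {set 'I_n}) i k x :
  i \notin A -> k \notin B -> Fev A i x -> Fev B k x -> x i < x k -> (#|B| < #|A|)%nat.
Proof. move=> iA kB hA hB lt.
have ki : k <> i by move=> e; rewrite e in lt; lra.
have kA : k \in A.
  case kA: (k \in A) => //; have := (hA k ki).2 (negbT kA); lra.
have sub : k |: B \subset A.
  apply/subsetP => l; rewrite in_setU1; case/orP => [/eqP->//|lB].
  have lk : l <> k by move=> e; rewrite -e lB in kB.
  have := (hB l lk).1 lB => hl.
  have li : l <> i by move=> e; rewrite e in hl; lra.
  case lA: (l \in A) => //; have := (hA l li).2 (negbT lA); lra.
have := subset_leq_card sub; rewrite cardsU1 kB /=; by [].
Qed.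

Lemma Fev_disj n (A B : {set 'I_n}) i k x :
  i \notin A -> k \notin B -> #|A| = #|B| -> (i, A) <> (k, B) -> Fev A i x -> Fev B k x -> False.
Proof. move=> iA kB cAB ne hA hB.
case: (eqVneq i k) => [e|ik].
  subst k; apply: ne; by rewrite (Fev_same iA kB hA hB).
have ki : k <> i by move=> e; rewrite e eqxx in ik.
have [h1 h2] := hA k ki.
case kA: (k \in A).
  have := Fev_card iA kB hA hB (h1 kA); by rewrite cAB ltnn.
have := Fev_card kB iA hB hA (h2 (negbT kA)); by rewrite cAB ltnn.
Qed.

Definition Bx n (x : 'I_n -> R) (i : 'I_n) : {set 'I_n} := [set l | Rltb (x i) (x l)].

Lemma Bx_notin n x (i : 'I_n) : i \notin Bx x i.
Proof. rewrite /Bx inE; apply/negP => /RltbP; lra. Qed.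

Lemma Bx_Fev n x (i : 'I_n) : (forall i k, i <> k -> x i <> x k) -> Fev (Bx x i) i x.
Proof. move=> nt l li; rewrite /Bx inE; split; first by move/RltbP.
move/negP => h; have : ~ x i < x l by move=> /RltbP. have := nt l i li; lra. Qed.

Lemma Fev_cover n (x : 'I_n -> R) m : (forall i k, i <> k -> x i <> x k) -> (m < n)%nat ->
  exists i, #|Bx x i| = m /\ Fev (Bx x i) i x.
Proof.
move=> nt; case: n x nt => [//|n'] x nt mn.
have bnd : forall i, (#|Bx x i| < n'.+1)%nat.
  move=> i; have : Bx x i \subset [set~ i].
    by apply/subsetP => l lB; rewrite !inE; apply/eqP => e; move: lB; rewrite e; apply/negP; exact: Bx_notin.
  move/subset_leq_card; rewrite cardsC1 card_ord /=; by [].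
pose f i : 'I_n'.+1 := inord #|Bx x i|.
have finj : injective f.
  move=> i k /(congr1 val); rewrite /f /= !inordK // => e.
  apply: NNPP => ne; have ik : i <> k by [].
  case: (Rlt_le_dec (x i) (x k)) => h.
    have := Fev_card (Bx_notin x i) (Bx_notin x k) (@Bx_Fev _ x i nt) (@Bx_Fev _ x k nt) h; by rewrite e ltnn.
  have h' : x k < x i by have := nt i k ik; lra.
  have := Fev_card (Bx_notin x k) (Bx_notin x i) (@Bx_Fev _ x k nt) (@Bx_Fev _ x i nt) h'; by rewrite e ltnn.
have [g fg gf] := injF_bij finj.
exists (g (inord m)); split; last exact: Bx_Fev.
have := gf (inord m); rewrite /f => /(congr1 val); rewrite /= !inordK //.
Qed.

Lemma iterR (k : nat) c : ssrnat.iter k (Rplus c) 0 = INR k * c.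
Proof. elim: k => [|k IH]; first by rewrite /=; lra. rewrite iterS IH S_INR; lra. Qed.

Lemma sum_const_R (I : finType) (P : pred I) c : \big[Rplus/0]_(i | P i) c = INR #|P| * c.
Proof. rewrite big_const_seq iterR; congr (INR _ * _). by rewrite cardE -size_filter /enum_mem. Qed.

Lemma P_Fev_eq n (Om : probability_space) (X : 'I_n -> Om -> R) (A B : {set 'I_n}) i k :
  exchangeable X -> i \notin A -> k \notin B -> #|A| = #|B| ->
  ps_P (fun w => Fev A i (fun l => X l w)) = ps_P (fun w => Fev B k (fun l => X l w)).
Proof. move=> hex iA kB cAB.
have [s [ski hs]] := exists_perm iA kB cAB.
rewrite -(hex s (Fev B k) (borel_Fev B k)).
apply: P_ext => w; rewrite (Fev_perm (fun l => X l w) ski hs); by split.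
Qed.

Definition NT n (Om : probability_space) (X : 'I_n -> Om -> R) (w : Om) : Prop :=
  forall i k, i <> k -> X i w <> X k w.

Lemma P_NT n (Om : probability_space) (X : 'I_n -> Om -> R) (i0 : 'I_n) :
  (forall i, random_variable (X i)) -> no_ties X ->
  ps_meas (NT X) /\ ps_P (fun w => ~ NT X w) = 0.
Proof. move=> hX hnt.
pose E (p : 'I_n * 'I_n) (w : Om) := p.1 <> p.2 /\ X p.1 w = X p.2 w.
have mE : forall p, ps_meas (E p).
  move=> p; apply: (borel_meas (B := fun x => p.1 <> p.2 /\ x p.1 = x p.2)) => //.
  apply: borel_and; [exact: borel_const | exact: borel_eq].
have hE : forall p, ps_P (E p) = 0.
  move=> [a b]; case: (eqVneq a b) => [<-|ab].
    rewrite -(P_empty Om); apply: P_ext => w; rewrite /E /=; tauto.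
  rewrite -(hnt a b (elimN eqP ab)); apply: P_ext => w; rewrite /E /=; split; [tauto|].
  by move=> h; split => // e; rewrite e eqxx in ab.
have [mU eU] := P_null_fin mE hE.
have eqv : forall w, (exists p, E p w) <-> ~ NT X w.
  move=> w; split.
    by case=> -[a b] [h1 h2] H; exact: H a b h1 h2.
  move=> h; apply: NNPP => h'; apply: h => a b ab e; apply: h'; by exists (a, b).
split; last by rewrite -(P_ext eqv).
apply: (meas_ext _ (meas_compl mU)) => w; split.
  move=> h a b ab e; apply: h; by exists (a, b).
move=> h; rewrite eqv; tauto.
Qed.

Lemma bin_card n (i : 'I_n) m :
  #|[pred B : {set 'I_n} | (i \notin B) && (#|B| == m)]| = 'C(n.-1, m).
Proof. have -> : n.-1 = #|[set~ i]| by rewrite cardsC1 card_ord.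
rewrite -cards_draws; apply: eq_card => B.
by rewrite !inE subsetC sub1set !inE. Qed.

Lemma card_notin n (A : {set 'I_n}) i : i \notin A -> (#|A| <= n.-1)%nat.
Proof. move=> iA; have : A \subset [set~ i].
  by apply/subsetP => l lA; rewrite !inE; apply/eqP => e; move: lA; rewrite e (negbTE iA).
by move/subset_leq_card; rewrite cardsC1 card_ord. Qed.

Lemma P_Fev_val n (Om : probability_space) (X : 'I_n -> Om -> R) (A : {set 'I_n}) i :
  (forall k, random_variable (X k)) -> exchangeable X -> no_ties X -> i \notin A ->
  ps_P (fun w => Fev A i (fun l => X l w)) = / (INR n * INR 'C(n.-1, #|A|)).
Proof. move=> hX hex hnt iA.
have n0 : (0 < n)%nat by apply: leq_ltn_trans (leq0n i) (ltn_ord i).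
set m := #|A|.
set c := ps_P _.
pose Q (p : 'I_n * {set 'I_n}) := (p.1 \notin p.2) && (#|p.2| == m).
pose E (p : 'I_n * {set 'I_n}) (w : Om) := Fev p.2 p.1 (fun l => X l w).
have mE : forall p, ps_meas (E p) by move=> p; apply: borel_meas => //; exact: borel_Fev.
have dE : forall p q, Q p -> Q q -> p <> q -> forall w, E p w -> E q w -> False.
  move=> [a B] [b C] /andP [/= aB /eqP cB] /andP [/= bC /eqP cC] ne w.
  apply: Fev_disj => //; by rewrite cB cC.
have [mU eU] := P_fin_union (Q := Q) mE dE.
have [mNT hNT] := P_NT i hX hnt.
have one : ps_P (fun w => exists p, Q p /\ E p w) = 1.
  apply: Rle_antisym; first exact: P_le1.
  have := P_compl mNT; rewrite hNT => e.
  have -> : 1 = ps_P (NT X) by lra.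
  apply: P_mono => // w hw.
  have mn : (m < n)%nat.
    apply: leq_ltn_trans (card_notin iA) _; by rewrite ltn_predL.
  have [k [ck fk]] := Fev_cover hw mn.
  exists (k, Bx (fun l => X l w) k); split => //.
  by rewrite /Q /= Bx_notin ck eqxx.
have hsum : \big[Rplus/0]_(p | Q p) ps_P (E p) = \big[Rplus/0]_(p | Q p) c.
  apply: eq_bigr => -[b B] /andP [/= bB /eqP cB].
  rewrite /E /c; apply: P_Fev_eq => //.
rewrite eU hsum in one.
have eqs : \big[Rplus/0]_(p | Q p) c = \big[Rplus/0]_(b : 'I_n) \big[Rplus/0]_(B : {set 'I_n} | (b \notin B) && (#|B| == m)) c.
  by rewrite pair_big_dep.
move: one; rewrite eqs.
under eq_bigr do rewrite sum_const_R bin_card.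
rewrite sum_const_R card_ord => one.
have hn : 0 < INR n by apply: lt_0_INR; apply/ltP.
have hC : 0 < INR 'C(n.-1, m) by apply: lt_0_INR; apply/ltP; rewrite bin_gt0; exact: card_notin iA.
have := Rmult_integral_contrapositive_currified _ _ (Rgt_not_eq _ _ hn) (Rgt_not_eq _ _ hC) => nz.
apply: (Rmult_eq_reg_l (INR n * INR 'C(n.-1, m))) => //.
rewrite Rinv_r //; rewrite -[RHS]one; ring.
Qed.

Lemma borel_iff n (A B : ('I_n -> R) -> Prop) : borel_Rn A -> borel_Rn B -> borel_Rn (fun x => A x <-> B x).
Proof. move=> hA hB; apply: (borel_ext _ (borel_and (borel_imp hA hB) (borel_imp hB hA))).
by move=> x; split; case. Qed.

Lemma Fev_sets n (A : {set 'I_n}) j (x : 'I_n -> R) : j \notin A -> Fev A j x ->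
  Bx x j = A /\ [set i | ~~ Rltb (x i) (x j)] = j |: A.
Proof. move=> jA hF; split; apply/setP => l; rewrite !inE.
  case: (eqVneq l j) => [->|lj].
    rewrite (negbTE jA); apply/RltbF; lra.
  have [h1 h2] := hF l (elimN eqP lj).
  case lA: (l \in A); first by apply/RltbP; exact: h1.
  apply/RltbF; have := h2 (negbT lA); lra.
case: (eqVneq l j) => [->|lj] /=.
  by have -> : Rltb (x j) (x j) = false by apply/RltbF; lra.
have [h1 h2] := hF l (elimN eqP lj).
case lA: (l \in A) => /=.
  by have -> : Rltb (x l) (x j) = false by apply/RltbF; have := h1 lA; lra.
by have -> : Rltb (x l) (x j) = true by apply/RltbP; exact: h2 (negbT lA).
Qed.

Lemma drop_null (Om : probability_space) (Y N : Om -> Prop) :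
  ps_meas Y -> ps_meas N -> ps_P (fun w => ~ N w) = 0 -> ps_P Y = ps_P (fun w => Y w /\ N w).
Proof. move=> mY mN h0.
rewrite (P_ext (B := fun w => (Y w /\ N w) \/ (Y w /\ ~ N w))); last first.
  by move=> w; split; [move=> y; case: (classic (N w)); tauto | tauto].
have m1 := meas_and mY mN. have m2 := meas_and mY (meas_compl mN).
rewrite P_add //; last tauto.
have := P_nonneg m2. have : ps_P (fun w => Y w /\ ~ N w) <= ps_P (fun w => ~ N w).
  apply: P_mono => //; [exact: meas_compl| tauto].
lra.
Qed.

Unset Implicit Arguments.

Theorem corollary8 (n : nat) (phi : {set 'I_n} -> bool)
  (Om : probability_space) (X : 'I_n -> Om -> R) :
  semicoherent phi ->
  (forall i, random_variable (X i)) ->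
  (forall i w, 0 <= X i w) ->
  exchangeable X ->
  no_ties X ->
  forall j : 'I_n, I_BP phi X j = bcoef phi j.
Proof.
move=> hs hX hx0 hex hnt j.
rewrite /I_BP.
pose Ch w := phi (Bx (fun l => X l w) j) = false /\ phi [set i | ~~ Rltb (X i w) (X j w)] = true.
have eEC : forall w, is_inf (failed_times phi X w) (X j w) <-> Ch w.
  move=> w; exact: (char_inf (x := fun i => X i w) j hs (fun i => hx0 i w)).
have mCh : ps_meas Ch.
  pose B := fun x : 'I_n -> R => exists p : {set 'I_n} * {set 'I_n},
     (phi p.1 = false /\ phi p.2 = true) /\
     ((forall l, l \in p.1 <-> x j < x l) /\ (forall l, l \in p.2 <-> ~ x l < x j)).
  have bB : borel_Rn B.
    apply: (borel_exists_fin j) => p.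
    apply: borel_and; first exact: borel_const.
    apply: borel_and; apply: (borel_forall_fin j) => l; apply: borel_iff;
      try exact: borel_const; try exact: borel_lt.
    apply: borel_not; exact: borel_lt.
  apply: (meas_ext _ (borel_meas hX bB)) => w; split.
    case=> -[U V] /= [[hU hV] [eU eV]]; rewrite /Ch.
    have -> : Bx (fun l => X l w) j = U.
      apply/setP => l; rewrite inE; apply/idP/idP => h.
        by apply/eU; apply/RltbP.
      by apply/RltbP; apply/eU.
    have -> : [set i | ~~ Rltb (X i w) (X j w)] = V.
      apply/setP => l; rewrite inE; apply/idP/idP => h.
        apply/eV => /RltbP hl; by rewrite hl in h.
      by apply/negP => /RltbP; apply/eV.
    by split.
  case=> hU hV; exists (Bx (fun l => X l w) j, [set i | ~~ Rltb (X i w) (X j w)]) => /=.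
  split; first by split.
  split => l; rewrite inE.
    by split; move/RltbP.
  by split; [move=> /negP h /RltbP | move=> h; apply/negP => /RltbP].
have [mNT hNT] := P_NT j hX hnt.
pose good (A : {set 'I_n}) := [&& j \notin A, phi (j |: A) & ~~ phi A].
pose F (A : {set 'I_n}) (w : Om) := Fev A j (fun l => X l w).
have mF : forall A, ps_meas (F A) by move=> A; apply: borel_meas => //; exact: borel_Fev.
have dF : forall A B, good A -> good B -> A <> B -> forall w, F A w -> F B w -> False.
  move=> A B /and3P [jA _ _] /and3P [jB _ _] ne w fA fB; apply: ne; exact: Fev_same fA fB.
have [mG eG] := P_fin_union (Q := good) mF dF.
rewrite (P_ext eEC) (drop_null mCh mNT hNT).
rewrite (P_ext (B := fun w => (exists A, good A /\ F A w) /\ NT X w)); last first.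
  move=> w; split.
    case=> -[hU hV] nt; split => //.
    exists (Bx (fun l => X l w) j).
    have jA := Bx_notin (fun l => X l w) j.
    have fA : F (Bx (fun l => X l w) j) w by exact: Bx_Fev.
    have [_ eV] := Fev_sets jA fA.
    rewrite eV in hV; split => //.
    by rewrite /good jA hV hU.
  case=> -[A [/and3P [jA pjA pA] fA]] nt; split => //.
  have [eU eV] := Fev_sets jA fA.
  by rewrite /Ch eU eV pjA (negbTE pA).
rewrite -(drop_null mG mNT hNT) eG /bcoef.
rewrite big_mkcond [RHS]big_mkcond; apply: eq_bigr => A _.
rewrite /good.
case jA: (j \in A) => //=.
rewrite (P_Fev_val hX hex hnt (negbT jA)).
have mono : (phi A <= phi (j |: A))%nat.
  by case: hs => hm _; apply: hm; apply/subsetP => l lA; rewrite in_setU1 lA orbT.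
case pA: (phi A); case pjA: (phi (j |: A)) => //=; rewrite /=; try lra.
by rewrite pA pjA in mono.
Qed.
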